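(* Under the hypothesis that $\sum_{k=1}^\infty\bar\lambda^X_k\mathbf 1(\bar\lambda^X_k<e^{-x})=\varphi(x)$, $x\ge0$, for some slowly varying function $\varphi$, for every $\varepsilon\in(0,1)$ the sequence $(\ln n^{X_d}(\varepsilon))_{d\in\mathbb N}$ is rapidly varying: $$\lim_{d\to\infty}\frac{\ln n^{X_{\lfloor cd\rfloor}}(\varepsilon)}{\ln n^{X_d}(\varepsilon)}=\infty\quad\text{for all }c>1.$$
   Context: Let $X$ be a centered random element of a separable Hilbert space $H$ with $\mathbb E\|X\|^2<\infty$, covariance eigenvalues $\lambda^X_1\ge\lambda^X_2\ge\dots\ge0$ (with multiplicity, padded with zeros), $\lambda^X_1>0$, trace $\Lambda^X$, and $\bar\lambda^X_k=\lambda^X_k/\Lambda^X$. $X_d=X^{\otimes d}$ is the centered random element of $H^{\otimes d}$ with covariance operator $(K^X)^{\otimes d}$; its eigenvalues are $\prod_{j=1}^d\lambda^X_{k_j}$. With $\bar\lambda^{X_d}_k$ the normalized nonincreasing eigenvalues of $X_d$, $n^{X_d}(\varepsilon)=\min\{n\in\mathbb N:\sum_{k>n}\bar\lambda^{X_d}_k\le\varepsilon^2\}$. A slowly varying function is a positive measurable $\varphi$ on some $[T,\infty)$ with $\varphi(cx)/\varphi(x)\to1$ as $x\to\infty$ for every $c>0$. $\lfloor\cdot\rfloor$ is the floor function. *)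

(* Defs.v *)
From Stdlib Require Import Reals Lra List.
Open Scope R_scope.

(* Covariance eigenvalue data of X: lam 0 >= lam 1 >= ... >= 0 (lam k = lambda^X_{k+1}),
   summable with trace Lam, lam 0 > 0. *)
Definition eigen_data (lam : nat -> R) (Lam : R) : Prop :=
  (forall k, 0 <= lam k) /\ (forall k, lam (S k) <= lam k) /\
  0 < lam 0%nat /\ infinite_sum lam Lam.

Definition lam_bar (lam : nat -> R) (Lam : R) (k : nat) : R := lam k / Lam.

(* eigenvalue of X_d = X^{tensor d} at multi-index l (a list of length d):
   product of the (normalized) one-dimensional eigenvalues *)
Definition tensor_eig (f : nat -> R) (l : list nat) : R :=
  fold_right (fun k acc => f k * acc) 1 l.

(* mu is the nonincreasing sequence of the values g l (l ranging over multi-indices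
   of length d), counted with multiplicity, padded with zeros. *)
Definition is_noninc_rearr (g : list nat -> R) (d : nat) (mu : nat -> R) : Prop :=
  (forall k, 0 <= mu k) /\ (forall k, mu (S k) <= mu k) /\
  exists sigma : nat -> list nat,
    (forall k, 0 < mu k -> length (sigma k) = d /\ mu k = g (sigma k)) /\
    (forall k1 k2, 0 < mu k1 -> 0 < mu k2 -> sigma k1 = sigma k2 -> k1 = k2) /\
    (forall l, length l = d -> 0 < g l -> exists k, 0 < mu k /\ sigma k = l).

(* sum_{k > n} mu_k <= eps^2  (mu indexed from 0, i.e. mu k = bar lambda_{k+1}) *)
Definition tail_le (mu : nat -> R) (n : nat) (eps : R) : Prop :=
  exists s, infinite_sum (fun j => mu (n + j)%nat) s /\ s <= eps ^ 2.

Definition is_approx_complexity (mu : nat -> R) (eps : R) (n : nat) : Prop :=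
  tail_le mu n eps /\ forall m, (m < n)%nat -> ~ tail_le mu m eps.

(* slowly varying: positive on some [T, oo) and phi(cx)/phi(x) -> 1 for every c > 0.
   (Measurability is automatic for the phi below, which is monotone.) *)
Definition slowly_varying (phi : R -> R) : Prop :=
  (exists T, forall x, T <= x -> 0 < phi x) /\
  forall c, 0 < c -> forall e, 0 < e -> exists M, forall x, M <= x ->
    Rabs (phi (c * x) / phi x - 1) < e.

Definition floorN (x : R) : nat := Z.to_nat (Int_part x).

(* Main.v *)
Require Import Defs.
From Stdlib Require Import Reals List.
From Stdlib Require Import Lra Lia Classical ClassicalEpsilon FinFun ZArith.
Open Scope R_scope.


Definition sumL {A} (f : A -> R) (L : list A) : R :=
  fold_right (fun x acc => f x + acc) 0 L.

Lemma sumL_app {A} (f : A -> R) L1 L2 : sumL f (L1 ++ L2) = sumL f L1 + sumL f L2.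
Proof. induction L1; simpl; [lra| rewrite IHL1; lra]. Qed.

Lemma sumL_ext {A} (f g : A -> R) L : (forall x, In x L -> f x = g x) -> sumL f L = sumL g L.
Proof. induction L; simpl; intros H; auto. rewrite H by auto. rewrite IHL; auto. Qed.

Lemma sumL_le {A} (f g : A -> R) L : (forall x, In x L -> f x <= g x) -> sumL f L <= sumL g L.
Proof. induction L; simpl; intros H; [lra|]. assert (H1 := H a (or_introl eq_refl)).
 assert (sumL f L <= sumL g L) by (apply IHL; auto). lra. Qed.

Lemma sumL_nonneg {A} (f : A -> R) L : (forall x, 0 <= f x) -> 0 <= sumL f L.
Proof. induction L; simpl; intros H; [lra|]. assert (H1 := H a). specialize (IHL H). lra. Qed.

Lemma sumL_plus {A} (f g : A -> R) L : sumL (fun x => f x + g x) L = sumL f L + sumL g L.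
Proof. induction L; simpl; [lra| rewrite IHL; lra]. Qed.

Lemma sumL_minus {A} (f g : A -> R) L : sumL (fun x => f x - g x) L = sumL f L - sumL g L.
Proof. induction L; simpl; [lra| rewrite IHL; lra]. Qed.

Lemma sumL_scal {A} (c : R) (f : A -> R) L : sumL (fun x => c * f x) L = c * sumL f L.
Proof. induction L; simpl; [lra| rewrite IHL; lra]. Qed.

Lemma sumL_const {A} (c : R) (L : list A) : sumL (fun _ => c) L = INR (length L) * c.
Proof. induction L; simpl length; [simpl; lra|]. rewrite S_INR. simpl. rewrite IHL. lra. Qed.

Lemma sumL_map {A B} (f : B -> R) (h : A -> B) L : sumL f (map h L) = sumL (fun x => f (h x)) L.
Proof. induction L; simpl; [lra| rewrite IHL; lra]. Qed.

Lemma sumL_flat_map {A B} (f : B -> R) (h : A -> list B) L :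
  sumL f (flat_map h L) = sumL (fun x => sumL f (h x)) L.
Proof. induction L; simpl; [lra| rewrite sumL_app, IHL; lra]. Qed.

Lemma sub_sum {I A} (s : I -> A) (L : list I) (B : list A) (f : A -> R) :
  NoDup L -> (forall x y, In x L -> In y L -> s x = s y -> x = y) ->
  (forall x, In x L -> In (s x) B) -> (forall a, 0 <= f a) ->
  sumL (fun x => f (s x)) L <= sumL f B.
Proof.
  revert B. induction L as [|x L IH]; intros B Hnd Hinj Hin Hf.
  - simpl. apply sumL_nonneg; auto.
  - simpl. destruct (in_split (s x) B (Hin x (or_introl eq_refl))) as [B1 [B2 ->]].
    rewrite sumL_app. simpl.
    inversion Hnd; subst.
    assert (sumL (fun x0 => f (s x0)) L <= sumL f (B1 ++ B2)).
    { apply IH; auto.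
      - intros; apply Hinj; simpl; auto.
      - intros y Hy. assert (Hy' := Hin y (or_intror Hy)).
        apply in_app_or in Hy'. apply in_or_app. destruct Hy' as [H|[H|H]]; auto.
        exfalso. assert (y = x) by (apply Hinj; simpl; auto). subst; auto. }
    rewrite sumL_app in H. lra.
Qed.

Lemma sum_f_R0_sumL f n : sum_f_R0 f n = sumL f (seq 0 (S n)).
Proof. induction n. simpl; lra. rewrite seq_S, sumL_app. simpl. rewrite IHn. simpl; lra. Qed.

Lemma sumL_shift (f : nat -> R) N k n :
  sumL (fun j => f (N + j)%nat) (seq k n) = sumL f (seq (N + k) n).
Proof. revert k. induction n; intros k; simpl; auto. rewrite IHn. f_equal. f_equal. f_equal. lia. Qed.


Fixpoint Box (m M : nat) : list (list nat) :=
  match m with O => nil :: nil | S m' => flat_map (fun k => map (cons k) (Box m' M)) (seq 0 M) end.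

Lemma pow_le_one x n : 0 <= x -> x <= 1 -> x ^ n <= 1.
Proof. intros; induction n; simpl; [lra|]. assert (0 <= x ^ n) by (apply pow_le; auto). nra. Qed.

Lemma tensor_nil f : tensor_eig f nil = 1.
Proof. reflexivity. Qed.
Lemma tensor_cons f k l : tensor_eig f (k :: l) = f k * tensor_eig f l.
Proof. reflexivity. Qed.

Lemma In_Box m M l : length l = m -> (forall k, In k l -> (k < M)%nat) -> In l (Box m M).
Proof.
  revert l; induction m; intros l Hl Hk.
  - destruct l; simpl in *; [auto|discriminate].
  - destruct l as [|k l]; simpl in Hl; [discriminate|]. simpl.
    apply in_flat_map. exists k. split.
    + apply in_seq. assert (k < M)%nat by (apply Hk; simpl; auto). lia.
    + apply in_map. apply IHm; [lia|]. intros; apply Hk; simpl; auto.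
Qed.

Lemma Box_len m M l : In l (Box m M) -> length l = m.
Proof.
  revert l; induction m; intros l H; simpl in H.
  - destruct H as [<-|[]]; reflexivity.
  - apply in_flat_map in H. destruct H as [k [_ H]]. apply in_map_iff in H.
    destruct H as [l' [<- H]]. simpl. rewrite (IHm l' H). reflexivity.
Qed.

Lemma NoDup_fm_cons (L : list (list nat)) ks : NoDup L -> NoDup ks ->
  NoDup (flat_map (fun k => map (cons k) L) ks).
Proof.
  intros HL; induction ks as [|k ks IH]; intros Hks; simpl; [constructor|].
  inversion Hks; subst. apply NoDup_app.
  - apply Injective_map_NoDup; auto. intros x y H; inversion H; auto.
  - apply IH; auto.
  - intros a Ha Hb. apply in_map_iff in Ha. destruct Ha as [l [<- _]].
    apply in_flat_map in Hb. destruct Hb as [k' [Hk' Hb]]. apply in_map_iff in Hb.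
    destruct Hb as [l' [E _]]. inversion E; subst. auto.
Qed.

Lemma Box_NoDup m M : NoDup (Box m M).
Proof.
  induction m; simpl. repeat constructor; auto. apply NoDup_fm_cons; auto. apply seq_NoDup.
Qed.

Lemma sum_Box_tensor h m M :
  sumL (tensor_eig h) (Box m M) = (sumL h (seq 0 M)) ^ m.
Proof.
  induction m; simpl. unfold tensor_eig; simpl; lra.
  rewrite sumL_flat_map. rewrite <- IHm.
  rewrite Rmult_comm, <- sumL_scal. apply sumL_ext. intros k _.
  rewrite sumL_map. rewrite Rmult_comm, <- sumL_scal. apply sumL_ext. intros l _.
  rewrite tensor_cons; lra.
Qed.

Lemma tensor_nonneg h l : (forall k, 0 <= h k) -> 0 <= tensor_eig h l.
Proof. intros H; induction l; [rewrite tensor_nil; lra| rewrite tensor_cons]. apply Rmult_le_pos; auto. Qed.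

Lemma sum_Box_W h Y m M :
  (forall k, 0 <= h k) -> (forall k, 0 <= Y k) -> sumL h (seq 0 M) <= 1 ->
  sumL (fun l => tensor_eig h l * sumL Y l) (Box m M) <= INR m * sumL (fun k => h k * Y k) (seq 0 M).
Proof.
  intros Hh HY Hr.
  assert (Hr0 : 0 <= sumL h (seq 0 M)) by (apply sumL_nonneg; auto).
  assert (HB : 0 <= sumL (fun k => h k * Y k) (seq 0 M)) by (apply sumL_nonneg; intros; apply Rmult_le_pos; auto).
  induction m.
  - simpl. unfold tensor_eig; simpl. lra.
  - simpl Box. rewrite sumL_flat_map.
    set (r := sumL h (seq 0 M)) in *. set (B := sumL (fun k => h k * Y k) (seq 0 M)) in *.
    set (E := sumL (fun l => tensor_eig h l * sumL Y l) (Box m M)) in *.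
    assert (E0 : 0 <= E) by (apply sumL_nonneg; intros; apply Rmult_le_pos; [apply tensor_nonneg; auto| apply sumL_nonneg; auto]).
    assert (Eq : sumL (fun x => sumL (fun l => tensor_eig h l * sumL Y l) (map (cons x) (Box m M))) (seq 0 M)
       = B * r ^ m + r * E).
    { unfold B, r, E. rewrite <- sum_Box_tensor.
      transitivity (sumL (fun k => sumL (tensor_eig h) (Box m M) * (h k * Y k) +
          sumL (fun l => tensor_eig h l * sumL Y l) (Box m M) * h k) (seq 0 M)).
      2:{ rewrite sumL_plus, !sumL_scal; lra. }
      apply sumL_ext. intros k _. rewrite sumL_map.
      rewrite Rmult_comm, <- sumL_scal. rewrite (Rmult_comm _ (h k)), <- sumL_scal. rewrite <- sumL_plus. apply sumL_ext. intros l _.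
      rewrite tensor_cons. simpl. lra. }
    rewrite Eq. rewrite S_INR.
    assert (r ^ m <= 1) by (apply pow_le_one; auto).
    nra.
Qed.


Lemma sum_mono f n n' : (forall k, 0 <= f k) -> (n <= n')%nat -> sum_f_R0 f n <= sum_f_R0 f n'.
Proof. intros Hf H; induction H; [lra|]. simpl. specialize (Hf (S m)). lra. Qed.

Lemma partial_le_sum f s n : (forall k, 0 <= f k) -> infinite_sum f s -> sum_f_R0 f n <= s.
Proof.
  intros Hf Hs. destruct (Rle_dec (sum_f_R0 f n) s) as [|Hn]; auto. exfalso.
  destruct (Hs (sum_f_R0 f n - s)) as [N HN]; [lra|].
  specialize (HN (max N n) (Nat.le_max_l _ _)). unfold R_dist in HN.
  assert (sum_f_R0 f n <= sum_f_R0 f (max N n)) by (apply sum_mono; auto; lia).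
  apply Rabs_def2 in HN. lra.
Qed.

Lemma sumL_le_sum f s M : (forall k, 0 <= f k) -> infinite_sum f s -> sumL f (seq 0 M) <= s.
Proof.
  intros Hf Hs. destruct M. simpl. apply Rle_trans with (sum_f_R0 f 0).
  simpl; auto. apply partial_le_sum; auto.
  rewrite <- sum_f_R0_sumL. apply partial_le_sum; auto.
Qed.

Lemma sum_le_sum f g s t : (forall k, f k <= g k) -> infinite_sum f s -> infinite_sum g t -> s <= t.
Proof. intros H Hs Ht. apply (Rle_cv_lim (Un := sum_f_R0 f) (Vn := sum_f_R0 g)); auto.
  intros n; apply sum_Rle; auto. Qed.

Lemma infinite_sum_minus f g s t : infinite_sum f s -> infinite_sum g t ->
  infinite_sum (fun k => f k - g k) (s - t).
Proof.
  intros Hs Ht. unfold infinite_sum in *.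
  assert (H := CV_minus _ _ _ _ Hs Ht). intros e He. destruct (H e He) as [N HN].
  exists N. intros n Hn. rewrite minus_sum. apply HN; auto.
Qed.

Lemma infinite_sum_scal f s a : infinite_sum f s -> infinite_sum (fun k => f k * a) (s * a).
Proof.
  intros Hs e He. destruct (Req_dec a 0) as [->|Ha].
  - exists O. intros n _. unfold R_dist. rewrite (sum_eq _ (fun _ => 0)).
    rewrite sum_eq_R0; auto. rewrite Rmult_0_r, Rminus_0_r, Rabs_R0; lra.
    intros; lra.
  - destruct (Hs (e / Rabs a)) as [N HN]. apply Rdiv_lt_0_compat; auto. apply Rabs_pos_lt; auto.
    exists N. intros n Hn. specialize (HN n Hn). unfold R_dist in *.
    rewrite <- scal_sum.
    replace (a * sum_f_R0 f n - s * a) with ((sum_f_R0 f n - s) * a) by ring.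
    rewrite Rabs_mult. assert (0 < Rabs a) by (apply Rabs_pos_lt; auto).
    apply Rmult_lt_compat_r with (r := Rabs a) in HN; auto.
    unfold Rdiv in HN. rewrite Rmult_assoc, Rinv_l, Rmult_1_r in HN; lra.
Qed.

Lemma infinite_sum_ext f g s : (forall k, f k = g k) -> infinite_sum f s -> infinite_sum g s.
Proof. intros H Hs e He. destruct (Hs e He) as [N HN]. exists N. intros n Hn.
  rewrite (sum_eq g f) by (intros; rewrite H; auto). auto. Qed.

Lemma infinite_sum_zero f s : (forall k, f k = 0) -> infinite_sum f s -> s = 0.
Proof. intros H Hs. apply (uniqueness_sum f); auto. intros e He. exists O. intros n _.
  unfold R_dist. rewrite sum_eq_R0 by auto. rewrite Rminus_0_r, Rabs_R0; lra. Qed.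


Definition ilt (p : nat -> R) (x : R) (k : nat) : R :=
  if Rlt_dec (p k) (exp (- x)) then p k else 0.
Definition hge (p : nat -> R) (x : R) (k : nat) : R :=
  if Rle_dec (exp (- x)) (p k) then p k else 0.

Lemma ilt_hge p x k : ilt p x k + hge p x k = p k.
Proof. unfold ilt, hge. destruct (Rlt_dec _ _), (Rle_dec _ _); lra. Qed.

Lemma ilt_nonneg p x k : 0 <= p k -> 0 <= ilt p x k.
Proof. unfold ilt; destruct (Rlt_dec _ _); lra. Qed.
Lemma hge_nonneg p x k : 0 <= p k -> 0 <= hge p x k.
Proof. unfold hge; destruct (Rle_dec _ _); lra. Qed.
Lemma hge_le p x k : 0 <= p k -> hge p x k <= p k.
Proof. unfold hge; destruct (Rle_dec _ _); lra. Qed.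

Lemma mono_gen (p : nat -> R) : (forall k, p (S k) <= p k) -> forall j j', (j <= j')%nat -> p j' <= p j.
Proof. intros H j j' Hj. induction Hj; [lra|]. specialize (H m). lra. Qed.

Lemma term_le_sumL (f : nat -> R) k : (forall j, 0 <= f j) -> f k <= sumL f (seq 0 (S k)).
Proof. intros Hf. rewrite seq_S, sumL_app. simpl.
  assert (0 <= sumL f (seq 0 k)) by (apply sumL_nonneg; auto). lra. Qed.

Lemma eigen_facts lam Lam : eigen_data lam Lam ->
  0 < Lam /\ infinite_sum (lam_bar lam Lam) 1 /\ (forall k, 0 <= lam_bar lam Lam k <= 1)
  /\ (forall k, lam_bar lam Lam (S k) <= lam_bar lam Lam k) /\ 0 < lam_bar lam Lam 0.
Proof.
  intros [H0 [Hm [Hp Hs]]].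
  assert (HL : forall k, lam k <= Lam).
  { intros k. apply Rle_trans with (sumL lam (seq 0 (S k))). apply term_le_sumL; auto.
    rewrite <- sum_f_R0_sumL. apply partial_le_sum; auto. }
  assert (HL0 : 0 < Lam) by (specialize (HL O); lra).
  unfold lam_bar. split; [auto|]. split; [|split; [|split]].
  - replace 1 with (Lam * / Lam) by (field; lra). apply infinite_sum_scal; auto.
  - intros k. assert (0 < / Lam) by (apply Rinv_0_lt_compat; auto). unfold Rdiv. split.
    apply Rmult_le_pos; auto; lra. rewrite <- (Rinv_r Lam) by lra. apply Rmult_le_compat_r; auto; lra.
  - intros k. unfold Rdiv. apply Rmult_le_compat_r; auto. left; apply Rinv_0_lt_compat; auto.
  - apply Rdiv_lt_0_compat; auto.
Qed.

Lemma hge_sum p phi x : infinite_sum p 1 -> (forall x, 0 <= x -> infinite_sum (ilt p x) (phi x)) ->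
  0 <= x -> infinite_sum (hge p x) (1 - phi x).
Proof.
  intros Hs Hphi Hx. apply infinite_sum_ext with (fun k => p k - ilt p x k).
  intros k; rewrite <- (ilt_hge p x k); ring. apply infinite_sum_minus; auto.
Qed.

Lemma phi_nonneg p phi x : (forall k, 0 <= p k) -> (forall x, 0 <= x -> infinite_sum (ilt p x) (phi x)) ->
  0 <= x -> 0 <= phi x.
Proof.
  intros Hp Hphi Hx. apply (sum_le_sum (fun _ => 0) (ilt p x)); auto.
  intros; apply ilt_nonneg; auto. intros e He; exists O; intros n _. unfold R_dist.
  rewrite sum_eq_R0 by auto. rewrite Rminus_0_r, Rabs_R0; lra.
Qed.

Lemma phi_le1 p phi x : (forall k, 0 <= p k) -> infinite_sum p 1 ->
  (forall x, 0 <= x -> infinite_sum (ilt p x) (phi x)) -> 0 <= x -> phi x <= 1.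
Proof.
  intros Hp Hs Hphi Hx. apply (sum_le_sum (ilt p x) p); auto.
  intros k; unfold ilt; destruct (Rlt_dec _ _); [lra|apply Hp].
Qed.

Lemma phi_mono p phi x x' : (forall k, 0 <= p k) -> (forall x, 0 <= x -> infinite_sum (ilt p x) (phi x)) ->
  0 <= x -> x <= x' -> phi x' <= phi x.
Proof.
  intros Hp Hphi Hx Hxx. apply (sum_le_sum (ilt p x') (ilt p x)); auto; [|apply Hphi; lra].
  intros k. unfold ilt. assert (exp (-x') <= exp (-x)).
  { destruct (Req_dec x x'); [subst; lra|]. left; apply exp_increasing; lra. }
  destruct (Rlt_dec (p k) (exp (-x'))), (Rlt_dec (p k) (exp (-x))); try lra.
  specialize (Hp k); lra.
Qed.

Lemma sumL_ilt_le p phi x M : (forall k, 0 <= p k) -> (forall x, 0 <= x -> infinite_sum (ilt p x) (phi x)) ->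
  0 <= x -> sumL (ilt p x) (seq 0 M) <= phi x.
Proof. intros. apply sumL_le_sum; auto. intros; apply ilt_nonneg; auto. Qed.

Lemma sumL_hge_le p phi x M : (forall k, 0 <= p k) -> infinite_sum p 1 ->
  (forall x, 0 <= x -> infinite_sum (ilt p x) (phi x)) ->
  0 <= x -> sumL (hge p x) (seq 0 M) <= 1 - phi x.
Proof. intros. apply sumL_le_sum; auto. intros; apply hge_nonneg; auto. apply hge_sum; auto. Qed.

Lemma sumL_p_le p M : (forall k, 0 <= p k) -> infinite_sum p 1 -> sumL p (seq 0 M) <= 1.
Proof. intros; apply sumL_le_sum; auto. Qed.

Lemma p_pos p phi : (forall k, 0 <= p k) -> (forall k, p (S k) <= p k) -> 0 < p 0%nat ->
  (forall x, 0 <= x -> infinite_sum (ilt p x) (phi x)) ->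
  (exists T, forall x, T <= x -> 0 < phi x) -> forall k, 0 < p k.
Proof.
  intros Hp Hm H0 Hphi [T HT] k. induction k; auto.
  destruct (Rlt_dec 0 (p (S k))) as [|Hn]; auto. exfalso.
  set (x := Rmax T (Rmax 0 (- ln (p k)))).
  assert (Hx0 : 0 <= x) by (unfold x; eapply Rle_trans; [|apply Rmax_r]; apply Rmax_l).
  assert (Hex : exp (- x) <= p k).
  { rewrite <- (exp_ln (p k)) by auto. destruct (Req_dec (-x) (ln (p k))) as [E|E].
    rewrite E; lra. left; apply exp_increasing.
    assert (- ln (p k) <= x) by (unfold x; eapply Rle_trans; [|apply Rmax_r]; apply Rmax_r). lra. }
  assert (phi x = 0).
  { apply (infinite_sum_zero (ilt p x)); auto. intros j. unfold ilt.
    destruct (Rlt_dec (p j) (exp (- x))); auto.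
    destruct (Compare_dec.le_lt_dec j k).
    - assert (p k <= p j) by (apply mono_gen; auto). lra.
    - assert (p j <= p (S k)) by (apply mono_gen; auto; lia). specialize (Hp j). lra. }
  assert (0 < phi x) by (apply HT; unfold x; apply Rmax_l). lra.
Qed.

Lemma phi_to0 p phi : (forall k, 0 < p k) -> (forall k, p k <= 1) -> (forall k, p (S k) <= p k) ->
  infinite_sum p 1 -> (forall x, 0 <= x -> infinite_sum (ilt p x) (phi x)) ->
  forall z, 0 < z -> exists x, 0 <= x /\ phi x < z.
Proof.
  intros Hp H1 Hm Hs Hphi z Hz. destruct (Hs z Hz) as [N HN]. specialize (HN N (le_n N)).
  unfold R_dist in HN. apply Rabs_def2 in HN.
  exists (- ln (p N)). assert (ln (p N) <= 0).
  { rewrite <- ln_1. destruct (Req_dec (p N) 1) as [->|]; [lra|]. left; apply ln_increasing; auto.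
    specialize (H1 N); lra. }
  split; [lra|].
  assert (Hp0 : forall k, 0 <= p k) by (intros; left; auto).
  assert (E : sum_f_R0 (hge p (- ln (p N))) N = sum_f_R0 p N).
  { apply sum_eq. intros i Hi. unfold hge. rewrite Ropp_involutive, exp_ln by auto.
    destruct (Rle_dec (p N) (p i)); auto. exfalso. apply n. apply mono_gen; auto. }
  assert (sum_f_R0 (hge p (- ln (p N))) N <= 1 - phi (- ln (p N))).
  { apply partial_le_sum. intros; apply hge_nonneg; auto. apply hge_sum; auto. lra. }
  lra.
Qed.


Definition Yv (p : nat -> R) (k : nat) : R := - ln (p k).

Lemma Yv_nonneg p k : 0 < p k -> p k <= 1 -> 0 <= Yv p k.
Proof. intros. unfold Yv. destruct (Req_dec (p k) 1) as [E|E]; [rewrite E, ln_1; lra|].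
  assert (ln (p k) < ln 1) by (apply ln_increasing; lra). rewrite ln_1 in H1. lra. Qed.

Lemma hgeY_le p x k : 0 < p k -> p k <= 1 -> 0 <= x -> hge p x k * Yv p k <= x * p k.
Proof.
  intros H0 H1 Hx. unfold hge. destruct (Rle_dec _ _) as [r|r].
  - unfold Yv. assert (- x <= ln (p k)).
    { destruct r as [E|E]. rewrite <- (ln_exp (-x)). left; apply ln_increasing; auto. apply exp_pos.
      rewrite <- E, ln_exp; lra. }
    nra.
  - nra.
Qed.

Lemma hgeY_split p x k : 0 < p k -> p k <= 1 -> 0 <= x ->
  hge p x k * Yv p k <= hge p (x/2) k * Yv p k + x * ilt p (x/2) k.
Proof.
  intros H0 H1 Hx. assert (HY := Yv_nonneg p k H0 H1).
  assert (exp (- x) <= exp (- (x/2))).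
  { destruct (Req_dec x 0). subst. replace (0/2) with 0 by field. lra. left; apply exp_increasing; lra. }
  destruct (Rle_dec (exp (- (x/2))) (p k)) as [r|r].
  - unfold hge, ilt. destruct (Rle_dec (exp (-x)) (p k)); [|lra].
    destruct (Rle_dec (exp (-(x/2))) (p k)); [|lra]. destruct (Rlt_dec (p k) (exp (- (x/2)))); lra.
  - unfold ilt. destruct (Rlt_dec (p k) (exp (-(x/2)))); [|lra].
    assert (hge p (x/2) k = 0) by (unfold hge; destruct (Rle_dec _ _); lra). rewrite H2.
    assert (hge p x k * Yv p k <= x * p k) by (apply hgeY_le; auto; lra). lra.
Qed.

Lemma pow2_ge n : INR n <= 2 ^ n.
Proof. induction n. simpl; lra. rewrite S_INR. simpl. assert (1 <= 2 ^ n) by (apply pow_R1_Rle; lra). lra. Qed.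

Lemma B_bound p phi X0 M x : (forall k, 0 < p k) -> (forall k, p k <= 1) -> infinite_sum p 1 ->
  (forall x, 0 <= x -> infinite_sum (ilt p x) (phi x)) -> 0 < X0 ->
  (forall s, X0 <= s -> phi s <= 3/2 * phi (2 * s)) -> 0 <= x ->
  sumL (fun k => hge p x k * Yv p k) (seq 0 M) <= 6 * x * phi x + 2 * X0.
Proof.
  intros Hp H1 Hs Hphi HX0 Hd Hx.
  assert (Hp0 : forall k, 0 <= p k) by (intros; left; auto).
  assert (Hclaim : forall J x, 0 <= x -> x < X0 * 2 ^ (S J) ->
     sumL (fun k => hge p x k * Yv p k) (seq 0 M) <= 6 * x * phi x + 2 * X0).
  { induction J; intros y Hy Hy2.
    - apply Rle_trans with (sumL (fun k => y * p k) (seq 0 M)).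
      apply sumL_le; intros; apply hgeY_le; auto. rewrite sumL_scal.
      assert (sumL p (seq 0 M) <= 1) by (apply sumL_p_le; auto).
      assert (0 <= sumL p (seq 0 M)) by (apply sumL_nonneg; auto).
      assert (0 <= phi y) by (apply (phi_nonneg p); auto). simpl in Hy2. nra.
    - destruct (Rlt_dec y (X0 * 2 ^ S J)) as [r|r]; [apply IHJ; auto|].
      assert (X0 * 2 <= X0 * 2 ^ S J).
      { apply Rmult_le_compat_l; [lra|]. simpl. assert (1 <= 2 ^ J) by (apply pow_R1_Rle; lra). lra. }
      assert (IH := IHJ (y/2) ltac:(lra) ltac:(simpl in *; lra)).
      apply Rle_trans with (sumL (fun k => hge p (y/2) k * Yv p k + y * ilt p (y/2) k) (seq 0 M)).
      apply sumL_le; intros; apply hgeY_split; auto.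
      rewrite sumL_plus, sumL_scal.
      assert (sumL (ilt p (y/2)) (seq 0 M) <= phi (y/2)) by (apply sumL_ilt_le; auto; lra).
      assert (phi (y/2) <= 3/2 * phi (2 * (y/2))) by (apply Hd; lra).
      replace (2 * (y/2)) with y in H2 by field.
      assert (0 <= phi (y/2)) by (apply (phi_nonneg p); auto; lra). nra. }
  destruct (archimed (x / X0)) as [Ha _].
  destruct (Z.le_gt_cases (up (x/X0)) 0) as [Hz|Hz].
  - apply (Hclaim O); auto. apply IZR_le in Hz. simpl.
    assert (x / X0 < 0 + 1) by lra. apply (Rmult_lt_compat_r X0) in H; auto.
    unfold Rdiv in H; rewrite Rmult_assoc, Rinv_l, Rmult_1_r in H; lra.
  - apply (Hclaim (Z.to_nat (up (x / X0)))); auto.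
    assert (INR (Z.to_nat (up (x/X0))) = IZR (up (x/X0))).
    { rewrite INR_IZR_INZ, Z2Nat.id; auto; lia. }
    assert (Hp2 := pow2_ge (Z.to_nat (up (x/X0)))). rewrite H in Hp2.
    assert (x / X0 < 2 ^ S (Z.to_nat (up (x / X0)))). { simpl. assert (1 <= 2 ^ Z.to_nat (up (x/X0))) by (apply pow_R1_Rle; lra). lra. }
    apply (Rmult_lt_compat_r X0) in H0; auto.
    unfold Rdiv in H0; rewrite Rmult_assoc, Rinv_l, Rmult_1_r in H0; lra.
Qed.


Lemma tensor_pos p l : (forall k, 0 < p k) -> 0 < tensor_eig p l.
Proof. intros H; induction l; [rewrite tensor_nil; lra| rewrite tensor_cons]. apply Rmult_lt_0_compat; auto. Qed.
Lemma tensor_le1 p l : (forall k, 0 < p k) -> (forall k, p k <= 1) -> tensor_eig p l <= 1.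
Proof. intros H H1; induction l; [rewrite tensor_nil; lra| rewrite tensor_cons].
  assert (0 < p a) by auto. assert (p a <= 1) by auto. assert (0 < tensor_eig p l) by (apply tensor_pos; auto). nra. Qed.

Lemma tensor_hge_cases p x l : (forall k, 0 < p k) -> (forall k, p k <= 1) ->
  tensor_eig (hge p x) l = tensor_eig p l \/
  (tensor_eig (hge p x) l = 0 /\ tensor_eig p l < exp (- x)).
Proof.
  intros H0 H1. induction l as [|k l IH]; [left; reflexivity|]. rewrite !tensor_cons.
  assert (Hg0 := tensor_pos p l H0). assert (Hg1 := tensor_le1 p l H0 H1).
  assert (Hk0 := H0 k). assert (Hk1 := H1 k).
  assert (Hk : hge p x k = p k \/ (hge p x k = 0 /\ p k < exp (- x))).
  { unfold hge. destruct (Rle_dec _ _); [left|right]; auto. split; auto; lra. }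
  destruct Hk as [Hk|[Hk Hk']]; rewrite Hk.
  - destruct IH as [E|[E1 E2]]. left; rewrite E; auto. right; split. rewrite E1; ring. nra.
  - right. split. ring. nra.
Qed.

Lemma ln_tensor p l : (forall k, 0 < p k) -> ln (tensor_eig p l) = - sumL (Yv p) l.
Proof. intros H; induction l; [rewrite tensor_nil, ln_1; simpl; lra|].
  rewrite tensor_cons, ln_mult; auto. rewrite IHl. unfold Yv; simpl; lra. apply tensor_pos; auto. Qed.

Definition fev (p : nat -> R) (u : R) (l : list nat) : R :=
  if Rlt_dec (tensor_eig p l) (exp (- u)) then tensor_eig p l else 0.

Lemma fev_nonneg p u l : (forall k, 0 < p k) -> 0 <= fev p u l.
Proof. intros; unfold fev; destruct (Rlt_dec _ _); [left; apply tensor_pos; auto| lra]. Qed.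

Lemma fev_pointwise p x u l : (forall k, 0 < p k) -> (forall k, p k <= 1) -> 0 < u ->
  fev p u l <= (tensor_eig p l - tensor_eig (hge p x) l) + tensor_eig (hge p x) l * sumL (Yv p) l / u.
Proof.
  intros H0 H1 Hu. assert (Hg := tensor_pos p l H0).
  assert (HY : 0 <= sumL (Yv p) l) by (apply sumL_nonneg; intros; apply Yv_nonneg; auto).
  unfold fev. destruct (tensor_hge_cases p x l H0 H1) as [E|[E1 E2]]; rewrite ?E, ?E1.
  - destruct (Rlt_dec _ _) as [r|r].
    + assert (ln (tensor_eig p l) < - u).
      { rewrite <- (ln_exp (-u)). apply ln_increasing; auto. }
      rewrite ln_tensor in H by auto.
      assert (1 < sumL (Yv p) l / u). { apply (Rmult_lt_reg_r u); auto. unfold Rdiv. rewrite Rmult_assoc, Rinv_l; lra. }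
      unfold Rdiv in *. nra.
    + unfold Rdiv. assert (0 <= sumL (Yv p) l * / u) by (apply Rmult_le_pos; auto; left; apply Rinv_0_lt_compat; auto).
      nra.
  - destruct (Rlt_dec _ _); lra.
Qed.

Lemma pow_diff a q m : 0 <= a -> a <= q -> q <= 1 -> q ^ m - (q - a) ^ m <= 1 - (1 - a) ^ m.
Proof.
  intros Ha Haq Hq. induction m; simpl; [lra|].
  assert ((q - a) ^ m <= (1 - a) ^ m) by (apply pow_incr; lra).
  assert (0 <= (q - a) ^ m) by (apply pow_le; lra).
  assert (q ^ m - (q - a) ^ m >= 0). { assert ((q-a)^m <= q^m) by (apply pow_incr; lra). lra. }
  nra.
Qed.

Lemma upper_box p phi X0 x u m M : (forall k, 0 < p k) -> (forall k, p k <= 1) -> infinite_sum p 1 ->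
  (forall x, 0 <= x -> infinite_sum (ilt p x) (phi x)) -> 0 < X0 ->
  (forall s, X0 <= s -> phi s <= 3/2 * phi (2 * s)) -> 0 <= x -> 0 < u ->
  sumL (fev p u) (Box m M) <= 1 - (1 - phi x) ^ m + INR m * (6 * x * phi x + 2 * X0) / u.
Proof.
  intros H0 H1 Hs Hphi HX0 Hd Hx Hu.
  assert (Hp0 : forall k, 0 <= p k) by (intros; left; auto).
  eapply Rle_trans. apply sumL_le. intros l _. apply (fev_pointwise p x u l); auto.
  rewrite sumL_plus, sumL_minus, !sum_Box_tensor.
  unfold Rdiv. rewrite (sumL_ext _ (fun l => / u * (tensor_eig (hge p x) l * sumL (Yv p) l))) by (intros; ring).
  rewrite sumL_scal.
  set (q := sumL p (seq 0 M)). set (r := sumL (hge p x) (seq 0 M)).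
  assert (Hqr : q - r = sumL (ilt p x) (seq 0 M)).
  { unfold q, r. rewrite <- sumL_minus. apply sumL_ext. intros k _. rewrite <- (ilt_hge p x k). ring. }
  assert (Ha : sumL (ilt p x) (seq 0 M) <= phi x) by (apply sumL_ilt_le; auto).
  assert (Ha0 : 0 <= sumL (ilt p x) (seq 0 M)) by (apply sumL_nonneg; intros; apply ilt_nonneg; auto).
  assert (Hq : q <= 1) by (apply sumL_p_le; auto).
  assert (Hr0 : 0 <= r) by (apply sumL_nonneg; intros; apply hge_nonneg; auto).
  assert (Hpd := pow_diff (q - r) q m ltac:(lra) ltac:(lra) Hq).
  replace (q - (q - r)) with r in Hpd by ring.
  assert (Hph1 : phi x <= 1) by (apply (phi_le1 p); auto).
  assert ((1 - phi x) ^ m <= (1 - (q - r)) ^ m) by (apply pow_incr; lra).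
  assert (HW := sum_Box_W (hge p x) (Yv p) m M (fun k => hge_nonneg p x k (Hp0 k))
      (fun k => Yv_nonneg p k (H0 k) (H1 k)) ltac:(unfold r in *; lra)).
  assert (HB := B_bound p phi X0 M x H0 H1 Hs Hphi HX0 Hd Hx).
  assert (0 < / u) by (apply Rinv_0_lt_compat; auto).
  assert (0 <= INR m) by apply pos_INR.
  assert (/ u * sumL (fun l => tensor_eig (hge p x) l * sumL (Yv p) l) (Box m M) <=
          / u * (INR m * (6 * x * phi x + 2 * X0))).
  { apply Rmult_le_compat_l; [lra|]. eapply Rle_trans; [apply HW|]. apply Rmult_le_compat_l; auto. }
  lra.
Qed.

Lemma lower_box p phi t m M : (forall k, 0 < p k) -> (forall k, p k <= 1) -> infinite_sum p 1 ->
  (forall x, 0 <= x -> infinite_sum (ilt p x) (phi x)) -> 0 <= t ->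
  (sumL p (seq 0 M)) ^ m - (1 - phi t) ^ m <= sumL (fev p t) (Box m M).
Proof.
  intros H0 H1 Hs Hphi Ht.
  assert (Hp0 : forall k, 0 <= p k) by (intros; left; auto).
  assert (sumL (fun l => tensor_eig p l - tensor_eig (hge p t) l) (Box m M) <= sumL (fev p t) (Box m M)).
  { apply sumL_le. intros l _. unfold fev. destruct (tensor_hge_cases p t l H0 H1) as [E|[E1 E2]].
    rewrite E. assert (0 < tensor_eig p l) by (apply tensor_pos; auto). destruct (Rlt_dec _ _); lra.
    rewrite E1. destruct (Rlt_dec _ _); lra. }
  rewrite sumL_minus, !sum_Box_tensor in H.
  assert (sumL (hge p t) (seq 0 M) <= 1 - phi t) by (apply sumL_hge_le; auto).
  assert (0 <= sumL (hge p t) (seq 0 M)) by (apply sumL_nonneg; intros; apply hge_nonneg; auto).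
  assert (sumL (hge p t) (seq 0 M) ^ m <= (1 - phi t) ^ m) by (apply pow_incr; lra).
  lra.
Qed.


Lemma least_ex (P : nat -> Prop) : (exists n, P n) -> exists n, P n /\ forall m, (m < n)%nat -> ~ P m.
Proof.
  intros [n Hn]. revert Hn. induction n as [n IH] using (well_founded_induction lt_wf).
  intros Hn. destruct (classic (exists m, (m < n)%nat /\ P m)) as [[m [Hm Pm]]|H].
  - apply (IH m Hm Pm).
  - exists n. split; auto. intros m Hm Pm. apply H; eauto.
Qed.

Lemma bound_list {A} (f : A -> nat) (L : list A) : exists K, forall x, In x L -> (f x < K)%nat.
Proof.
  induction L as [|a L [K HK]]. exists O; intros x [].
  exists (S (max (f a) K)). intros x [<-|Hx]. lia. specialize (HK x Hx). lia.
Qed.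

Lemma Un_cv_le_const (u : nat -> R) l b : Un_cv u l -> (forall n, u n <= b) -> l <= b.
Proof. intros Hu Hb. apply (Rle_cv_lim (Un := u) (Vn := fun _ => b)); auto.
  intros e He. exists O. intros n _. unfold R_dist. rewrite Rminus_diag, Rabs_R0; lra. Qed.

Lemma tau_ex (sigma : nat -> list nat) (mu : nat -> R) :
  exists tau : list nat -> nat, forall l, (exists k, 0 < mu k /\ sigma k = l) ->
     0 < mu (tau l) /\ sigma (tau l) = l.
Proof.
  exists (fun l => epsilon (inhabits O) (fun k => 0 < mu k /\ sigma k = l)).
  intros l H. apply (epsilon_spec (inhabits O) (fun k => 0 < mu k /\ sigma k = l)). auto.
Qed.

Lemma mu_pos p d mu : (forall k, 0 < p k) -> (1 <= d)%nat ->
  is_noninc_rearr (tensor_eig p) d mu -> forall k, 0 < mu k.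
Proof.
  intros Hp Hd [Hnn [Hm [sigma [Hs1 [Hs2 Hs3]]]]] k0.
  destruct (Rlt_dec 0 (mu k0)) as [|Hn]; auto. exfalso.
  destruct (tau_ex sigma mu) as [tau Htau].
  set (li := fun i : nat => i :: repeat O (d - 1)).
  assert (Hli : forall i, 0 < mu (tau (li i)) /\ sigma (tau (li i)) = li i).
  { intros i. apply Htau. apply Hs3. unfold li; simpl. rewrite repeat_length. lia. apply tensor_pos; auto. }
  set (J := map (fun i => tau (li i)) (seq 0 (S k0))).
  assert (HND : NoDup J).
  { apply Injective_map_NoDup_in; [|apply seq_NoDup]. intros x y _ _ E.
    assert (li x = li y) by (rewrite <- (proj2 (Hli x)), <- (proj2 (Hli y)), E; auto).
    unfold li in H; inversion H; auto. }
  assert (Hincl : incl J (seq 0 k0)).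
  { intros j Hj. unfold J in Hj. apply in_map_iff in Hj. destruct Hj as [i [<- _]].
    apply in_seq. split; [lia|]. destruct (Compare_dec.le_lt_dec k0 (tau (li i))) as [H|H]; [|lia].
    exfalso. assert (mu (tau (li i)) <= mu k0) by (apply mono_gen; auto). specialize (Hli i). lra. }
  assert (HL := NoDup_incl_length HND Hincl). unfold J in HL. rewrite length_map, !length_seq in HL. lia.
Qed.

Lemma core_lower p d mu eps nX t M : (forall k, 0 < p k) -> (forall k, p k <= 1) ->
  is_noninc_rearr (tensor_eig p) d mu -> is_approx_complexity mu eps nX ->
  sumL (fev p t) (Box d M) <= INR nX * exp (- t) + eps ^ 2.
Proof.
  intros Hp0 Hp1 Hmu [[s [Hs Hse]] _].
  destruct Hmu as [Hnn [Hm [sigma [Hs1 [Hs2 Hs3]]]]].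
  destruct (tau_ex sigma mu) as [tau Htau].
  assert (Ht : forall l, In l (Box d M) -> 0 < mu (tau l) /\ sigma (tau l) = l /\ mu (tau l) = tensor_eig p l).
  { intros l Hl. assert (Hlen := Box_len _ _ _ Hl).
    destruct (Htau l) as [H1 H2]. apply Hs3; auto. apply tensor_pos; auto.
    split; auto. split; auto. rewrite <- H2 at 2. apply Hs1; auto. }
  set (F' := fun j => if Compare_dec.lt_dec j nX then exp (- t) else mu j).
  assert (HF'0 : forall j, 0 <= F' j). { intros j; unfold F'; destruct (Compare_dec.lt_dec _ _); [left; apply exp_pos|auto]. }
  destruct (bound_list tau (Box d M)) as [K HK].
  apply Rle_trans with (sumL (fun l => F' (tau l)) (Box d M)).
  { apply sumL_le. intros l Hl. destruct (Ht l Hl) as [H1 [H2 H3]]. unfold fev, F'.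
    rewrite <- H3. assert (0 < exp (- t)) by apply exp_pos. destruct (Rlt_dec _ _), (Compare_dec.lt_dec _ _); lra. }
  apply Rle_trans with (sumL F' (seq 0 (nX + K))).
  { apply sub_sum; auto. apply Box_NoDup.
    intros x y Hx Hy E. destruct (Ht x Hx) as [_ [Hx2 _]]. destruct (Ht y Hy) as [_ [Hy2 _]]. congruence.
    intros x Hx. apply in_seq. specialize (HK x Hx). lia. }
  rewrite seq_app, sumL_app. simpl.
  rewrite (sumL_ext F' (fun _ => exp (- t))).
  2:{ intros j Hj. apply in_seq in Hj. unfold F'. destruct (Compare_dec.lt_dec _ _); auto; lia. }
  rewrite sumL_const, length_seq.
  rewrite (sumL_ext F' mu).
  2:{ intros j Hj. apply in_seq in Hj. unfold F'. destruct (Compare_dec.lt_dec _ _); auto; lia. }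
  assert (E : sumL mu (seq nX K) = sumL (fun j => mu (nX + j)%nat) (seq 0 K))
    by (rewrite sumL_shift, Nat.add_0_r; auto). rewrite E.
  assert (sumL (fun j => mu (nX + j)%nat) (seq 0 K) <= s) by (apply sumL_le_sum; auto).
  lra.
Qed.

Lemma bound_entries (Ls : list (list nat)) : exists M, forall l, In l Ls -> forall k, In k l -> (k < M)%nat.
Proof.
  induction Ls as [|l Ls [M HM]]. exists O; intros l [].
  destruct (bound_list (fun k => k) l) as [K HK].
  exists (max K M). intros l' [<-|Hl'] k Hk. specialize (HK k Hk). lia. specialize (HM l' Hl' k Hk). lia.
Qed.

Lemma exp_u_inv u : exp u * exp (- u) = 1.
Proof. rewrite <- exp_plus. replace (u + - u) with 0 by ring. apply exp_0. Qed.

Lemma nat_gt_real (x : R) : exists n : nat, x < INR n.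
Proof.
  destruct (archimed x) as [Ha _]. destruct (Z.le_gt_cases (up x) 0) as [Hz|Hz].
  - exists O. apply IZR_le in Hz. simpl. lra.
  - exists (Z.to_nat (up x)). rewrite INR_IZR_INZ, Z2Nat.id by lia. auto.
Qed.

Lemma core_upper p d mu eps nX u : (forall k, 0 < p k) -> (forall k, p k <= 1) -> infinite_sum p 1 ->
  (1 <= d)%nat -> is_noninc_rearr (tensor_eig p) d mu -> is_approx_complexity mu eps nX -> 0 < u ->
  (forall M, sumL (fev p u) (Box d M) <= eps ^ 2) -> ln (INR nX) <= u.
Proof.
  intros Hp0 Hp1 Hs Hd Hmu HnX Hu HB.
  assert (Hmp := mu_pos p d mu Hp0 Hd Hmu).
  destruct Hmu as [Hnn [Hm [sigma [Hs1 [Hs2 Hs3]]]]].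
  assert (Hsub : forall L, NoDup L -> exists M, forall f, (forall l, 0 <= f l) ->
            sumL (fun j => f (sigma j)) L <= sumL f (Box d M)).
  { intros L HL. destruct (bound_entries (map sigma L)) as [M HM]. exists M. intros f Hf.
    apply sub_sum; auto.
    intros x Hx. apply In_Box. apply Hs1; auto. intros k Hk. apply (HM (sigma x)); auto. apply in_map; auto. }
  assert (Hq : forall M, sumL (tensor_eig p) (Box d M) <= 1).
  { intros M. rewrite sum_Box_tensor. apply pow_le_one. apply sumL_nonneg; intros; left; auto.
    apply sumL_p_le; auto. intros; left; auto. }
  assert (Hcard : forall N, (forall k, (k < N)%nat -> exp (- u) <= mu k) -> INR N * exp (- u) <= 1).
  { intros N HN. destruct (Hsub (seq 0 N) (seq_NoDup _ _)) as [M HM].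
    specialize (HM (tensor_eig p) (fun l => Rlt_le _ _ (tensor_pos p l Hp0))).
    rewrite (sumL_ext _ mu) in HM. 2:{ intros j _. symmetry. apply Hs1. apply Hmp. }
    assert (sumL (fun _ => exp (- u)) (seq 0 N) <= sumL mu (seq 0 N)).
    { apply sumL_le. intros j Hj. apply in_seq in Hj. apply HN; lia. }
    rewrite sumL_const, length_seq in H. specialize (Hq M). lra. }
  assert (Hex : exists k, mu k < exp (- u)).
  { apply NNPP. intros Hn. destruct (nat_gt_real (exp u)) as [n Hn'].
    assert (INR n * exp (- u) <= 1).
    { apply Hcard. intros k _. apply Rnot_lt_le. intros H. apply Hn; eauto. }
    assert (exp u * exp (- u) < INR n * exp (- u)) by (apply Rmult_lt_compat_r; auto; apply exp_pos).
    rewrite exp_u_inv in H0. lra. }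
  destruct (least_ex _ Hex) as [N0 [HN0 HN0']].
  assert (HcN : INR N0 * exp (- u) <= 1).
  { apply Hcard. intros k Hk. apply Rnot_lt_le. apply HN0'; auto. }
  assert (Hafter : forall j, (N0 <= j)%nat -> mu j < exp (- u)).
  { intros j Hj. assert (mu j <= mu N0) by (apply mono_gen; auto). lra. }
  assert (Htail : tail_le mu N0 eps).
  { assert (Hbd : forall J, sum_f_R0 (fun j => mu (N0 + j)%nat) J <= eps ^ 2).
    { intros J. rewrite sum_f_R0_sumL, sumL_shift, Nat.add_0_r.
      destruct (Hsub (seq N0 (S J)) (seq_NoDup _ _)) as [M HM].
      specialize (HM (fev p u) (fun l => fev_nonneg p u l Hp0)).
      rewrite (sumL_ext _ mu) in HM. eapply Rle_trans; [apply HM| apply HB].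
      intros j Hj. apply in_seq in Hj. destruct (Hs1 j (Hmp j)) as [_ E]. unfold fev. rewrite <- E.
      destruct (Rlt_dec _ _); auto. exfalso. apply n. apply Hafter. lia. }
    destruct (growing_cv (sum_f_R0 (fun j => mu (N0 + j)%nat))) as [l Hl].
    - intros n. simpl. specialize (Hnn (N0 + S n)%nat). lra.
    - exists (eps ^ 2). intros x [n ->]. apply Hbd.
    - exists l. split. exact Hl. apply (Un_cv_le_const _ _ _ Hl Hbd). }
  assert (HnN : (nX <= N0)%nat).
  { destruct (Compare_dec.le_lt_dec nX N0) as [|H]; auto. exfalso. apply (proj2 HnX N0); auto. }
  assert (INR nX <= exp u).
  { assert (INR nX <= INR N0) by (apply le_INR; auto).
    assert (INR N0 <= exp u).
    { apply (Rmult_le_reg_r (exp (- u))). apply exp_pos. rewrite exp_u_inv. auto. }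
    lra. }
  destruct (Rlt_dec 0 (INR nX)) as [Hpos|Hpos].
  - rewrite <- (ln_exp u). destruct H as [H|H]. left; apply ln_increasing; auto. rewrite H; lra.
  - unfold ln. destruct (Rlt_dec 0 (INR nX)); [contradiction|]. lra.
Qed.


Lemma bernoulli h n : -1 <= h -> 1 + INR n * h <= (1 + h) ^ n.
Proof.
  intros Hh. induction n. simpl; lra. rewrite S_INR. simpl.
  assert (0 <= 1 + h) by lra. assert (0 <= INR n) by apply pos_INR.
  assert (0 <= INR n * h * h) by (assert (0 <= h * h) by nra; nra). nra.
Qed.

Lemma exp_pow_n z n : exp z ^ n = exp (INR n * z).
Proof. induction n. simpl. rewrite Rmult_0_l, exp_0; auto. rewrite S_INR. simpl. rewrite IHn, <- exp_plus. f_equal; ring. Qed.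

Lemma pow_exp z n : 0 <= z <= 1 -> (1 - z) ^ n <= exp (- (INR n * z)).
Proof.
  intros Hz. replace (- (INR n * z)) with (INR n * (- z)) by ring. rewrite <- exp_pow_n.
  apply pow_incr. split; [lra|]. assert (H := exp_ineq1_le (- z)). lra.
Qed.

Lemma pow_lower z n : 0 <= z <= 1 -> (1 - INR n * z ^ 2) * exp (- (INR n * z)) <= (1 - z) ^ n.
Proof.
  intros Hz. assert (H1 : (1 + z) ^ n <= exp (INR n * z)).
  { rewrite <- exp_pow_n. apply pow_incr. split; [lra|]. apply exp_ineq1_le. }
  assert (H2 : 1 + INR n * (- z ^ 2) <= (1 + - z ^ 2) ^ n) by (apply bernoulli; simpl; nra).
  assert (H3 : (1 + - z ^ 2) ^ n = (1 - z) ^ n * (1 + z) ^ n).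
  { rewrite <- Rpow_mult_distr. f_equal. simpl; ring. }
  assert (H4 : 0 <= (1 - z) ^ n) by (apply pow_le; lra).
  assert (H5 : exp (INR n * z) * exp (- (INR n * z)) = 1) by apply exp_u_inv.
  assert (H6 : 0 < exp (- (INR n * z))) by apply exp_pos.
  assert ((1 - z) ^ n * (1 + z) ^ n <= (1 - z) ^ n * exp (INR n * z)) by (apply Rmult_le_compat_l; auto).
  assert (1 - INR n * z ^ 2 <= (1 - z) ^ n * exp (INR n * z)) by lra.
  apply (Rmult_le_compat_r (exp (- (INR n * z)))) in H0; [|lra].
  rewrite Rmult_assoc, H5, Rmult_1_r in H0. auto.
Qed.

Lemma floorN_ge y : 0 <= y -> y - 1 < INR (floorN y) /\ INR (floorN y) <= y.
Proof.
  intros Hy. unfold floorN. destruct (base_Int_part y) as [H1 H2].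
  assert (HI : (0 <= Int_part y)%Z).
  { apply le_IZR. assert (IZR (Int_part y) > -1) by lra.
    destruct (Z.le_gt_cases 0 (Int_part y)) as [|Hn]; [apply IZR_le; auto|].
    assert (Int_part y <= -1)%Z by lia. apply IZR_le in H0. lra. }
  rewrite INR_IZR_INZ, Z2Nat.id by auto. lra.
Qed.

Lemma sv_lower phi : slowly_varying phi -> forall c0, 0 < c0 -> forall e, 0 < e ->
  exists M, forall x, M <= x -> 0 < phi x /\ (1 - e) * phi x < phi (c0 * x).
Proof.
  intros [[T HT] Hsv] c0 Hc0 e He. destruct (Hsv c0 Hc0 e He) as [M HM].
  exists (Rmax M T). intros x Hx. assert (Hp : 0 < phi x) by (apply HT; eapply Rle_trans; [apply Rmax_r|eauto]).
  split; auto. specialize (HM x ltac:(eapply Rle_trans; [apply Rmax_l|eauto])).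
  apply Rabs_def2 in HM. destruct HM as [_ HM].
  assert (1 - e < phi (c0 * x) / phi x) by lra.
  apply (Rmult_lt_compat_r (phi x)) in H; auto. unfold Rdiv in H.
  rewrite Rmult_assoc, Rinv_l, Rmult_1_r in H; lra.
Qed.

Lemma pow_ge1 r j : 1 <= r -> 1 <= r ^ j.
Proof. intros; apply pow_R1_Rle; auto. Qed.

Lemma grow_xphi (phi : R -> R) X0 S0 : 0 < X0 -> (forall s, X0 <= s -> 2/3 * phi s <= phi (2 * s)) ->
  X0 <= S0 -> 0 <= phi S0 -> forall j, (4/3) ^ j * (S0 * phi S0) <= (S0 * 2 ^ j) * phi (S0 * 2 ^ j).
Proof.
  intros HX0 Hd HS Hp j. induction j. simpl. rewrite !Rmult_1_r, Rmult_1_l. lra.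
  replace (S0 * 2 ^ S j) with (2 * (S0 * 2 ^ j)) by (simpl; ring).
  assert (H1 : 1 <= 2 ^ j) by (apply pow_ge1; lra).
  assert (H2 : 2/3 * phi (S0 * 2 ^ j) <= phi (2 * (S0 * 2 ^ j))) by (apply Hd; nra).
  assert (0 <= S0 * 2 ^ j) by nra.
  simpl. nra.
Qed.

Lemma select (phi : R -> R) X1 Dd A : 0 < X1 -> 0 < A -> 0 < Dd ->
  (forall x x', 0 <= x -> x <= x' -> phi x' <= phi x) ->
  (forall z, 0 < z -> exists x, 0 <= x /\ phi x < z) ->
  A < Dd * phi X1 ->
  exists j, Dd * phi (X1 * 2 ^ S j) <= A /\ A < Dd * phi (X1 * 2 ^ j).
Proof.
  intros HX1 HA HD Hm H0 Hgt.
  destruct (H0 (A / Dd)) as [xs [Hxs Hxs2]]. apply Rdiv_lt_0_compat; auto.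
  destruct (nat_gt_real (xs / X1)) as [n Hn].
  assert (HP : exists j, Dd * phi (X1 * 2 ^ j) <= A).
  { exists n. assert (xs <= X1 * 2 ^ n).
    { assert (H := pow2_ge n). apply (Rmult_lt_compat_r X1) in Hn; auto. unfold Rdiv in Hn.
      rewrite Rmult_assoc, Rinv_l, Rmult_1_r in Hn by lra. nra. }
    assert (phi (X1 * 2 ^ n) <= phi xs) by (apply Hm; auto).
    assert (Dd * phi xs < A).
    { apply (Rmult_lt_compat_l Dd) in Hxs2; auto. unfold Rdiv in Hxs2.
      rewrite <- Rmult_assoc, (Rmult_comm Dd A), Rmult_assoc, Rinv_r, Rmult_1_r in Hxs2 by lra. auto. }
    nra. }
  destruct (least_ex _ HP) as [j [Hj Hj']]. destruct j.
  - simpl in Hj. rewrite Rmult_1_r in Hj. lra.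
  - exists j. split; auto. apply Rnot_le_lt. apply Hj'. lia.
Qed.

Lemma lower_final p phi d mu eps nX t dl : (forall k, 0 < p k) -> (forall k, p k <= 1) -> infinite_sum p 1 ->
  (forall x, 0 <= x -> infinite_sum (ilt p x) (phi x)) -> (1 <= d)%nat ->
  is_noninc_rearr (tensor_eig p) d mu -> is_approx_complexity mu eps nX -> 0 <= t -> 0 < dl ->
  eps ^ 2 + 2 * dl <= 1 - (1 - phi t) ^ d -> t + ln dl <= ln (INR nX).
Proof.
  intros Hp0 Hp1 Hs Hphi Hd Hmu HnX Ht Hdl Hc.
  assert (HdR : 1 <= INR d) by (apply (le_INR 1); auto).
  destruct (Hs (dl / (2 * INR d))) as [N HN]. apply Rdiv_lt_0_compat; lra.
  specialize (HN N (le_n N)). unfold R_dist in HN. apply Rabs_def2 in HN.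
  set (q := sumL p (seq 0 (S N))).
  assert (Hq : q = sum_f_R0 p N) by (unfold q; rewrite sum_f_R0_sumL; auto).
  assert (Hq1 : q <= 1) by (apply sumL_p_le; auto; intros; left; auto).
  assert (Hq0 : 0 <= q) by (apply sumL_nonneg; intros; left; auto).
  assert (Hb := bernoulli (q - 1) d ltac:(lra)). replace (1 + (q - 1)) with q in Hb by ring.
  assert (Hqd : 1 - dl / 2 < q ^ d).
  { assert (INR d * (q - 1) > - (dl / 2)).
    { assert (1 - q < dl / (2 * INR d)) by lra.
      apply (Rmult_lt_compat_l (INR d)) in H; [|lra].
      assert (INR d * (dl / (2 * INR d)) = dl / 2) by (field; lra). lra. }
    lra. }
  assert (H1 := lower_box p phi t d (S N) Hp0 Hp1 Hs Hphi Ht). fold q in H1.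
  assert (H2 := core_lower p d mu eps nX t (S N) Hp0 Hp1 Hmu HnX).
  assert (Hn : dl < INR nX * exp (- t)) by lra.
  assert (Hn' : dl * exp t < INR nX).
  { apply (Rmult_lt_compat_r (exp t)) in Hn; [|apply exp_pos].
    rewrite Rmult_assoc, (Rmult_comm (exp (-t))), exp_u_inv, Rmult_1_r in Hn. auto. }
  assert (0 < dl * exp t) by (apply Rmult_lt_0_compat; auto; apply exp_pos).
  assert (ln (dl * exp t) < ln (INR nX)) by (apply ln_increasing; auto).
  rewrite ln_mult, ln_exp in H0 by (auto; apply exp_pos). lra.
Qed.


Lemma mxl x y z : x <= y -> x <= Rmax y z.
Proof. intros; eapply Rle_trans; [eauto|apply Rmax_l]. Qed.
Lemma mxr x y z : x <= z -> x <= Rmax y z.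
Proof. intros; eapply Rle_trans; [eauto|apply Rmax_r]. Qed.

Theorem corollary1
  (lam : nat -> R) (Lam : R) (phi : R -> R)
  (Hlam : eigen_data lam Lam)
  (Hphi : forall x, 0 <= x ->
     infinite_sum
       (fun k => if Rlt_dec (lam_bar lam Lam k) (exp (- x)) then lam_bar lam Lam k else 0)
       (phi x))
  (Hsv : slowly_varying phi)
  (mu : nat -> nat -> R)
  (Hmu : forall d, is_noninc_rearr (tensor_eig (lam_bar lam Lam)) d (mu d))
  (eps : R) (Heps : 0 < eps < 1)
  (nX : nat -> nat)
  (HnX : forall d, is_approx_complexity (mu d) eps (nX d))
  (c : R) (Hc : 1 < c) :
  cv_infty (fun d => ln (INR (nX (floorN (c * INR d)))) / ln (INR (nX d))).
Proof.
  set (p := lam_bar lam Lam) in *.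
  destruct (eigen_facts lam Lam Hlam) as [HL [Hs [Hp01 [Hm Hp0']]]]. fold p in Hs, Hp01, Hm, Hp0'.
  assert (Hphi' : forall x, 0 <= x -> infinite_sum (ilt p x) (phi x)) by exact Hphi.
  clear Hphi.
  assert (Hpp : forall k, 0 < p k) by (apply (p_pos p phi); auto; [intros; apply Hp01| apply (proj1 Hsv)]).
  assert (Hp1 : forall k, p k <= 1) by (intros; apply Hp01).
  assert (Hpn : forall k, 0 <= p k) by (intros; apply Hp01).
  assert (Hmono : forall x x', 0 <= x -> x <= x' -> phi x' <= phi x) by (intros; apply (phi_mono p); auto).
  assert (Hto0 := phi_to0 p phi Hpp Hp1 Hm Hs Hphi').
  assert (Hle1 : forall x, 0 <= x -> phi x <= 1) by (intros; apply (phi_le1 p); auto).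
  destruct (proj1 Hsv) as [T0 HT0].
  assert (He2 : 0 < 1 - eps ^ 2 < 1) by (simpl; nra).
  set (a := - ln (1 - eps ^ 2)).
  assert (Hea : exp (- a) = 1 - eps ^ 2) by (unfold a; rewrite Ropp_involutive, exp_ln; lra).
  assert (Ha : 0 < a).
  { unfold a. assert (ln (1 - eps ^ 2) < ln 1) by (apply ln_increasing; lra). rewrite ln_1 in H. lra. }
  set (th := (c + 1) / (2 * c)).
  set (be := (c + 1) / 2).
  set (th' := (be + 3) / 4).
  set (eta := Rmin (1/3) ((be - 1) / (4 * be))).
  assert (Hth : 0 < th < 1) by (unfold th; split; [apply Rdiv_lt_0_compat; lra| apply Rmult_lt_reg_r with (2 * c); [lra|]; field_simplify; lra]).
  assert (Hcth : c * th = be) by (unfold th, be; field; lra).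
  assert (Hbe : 1 < be) by (unfold be; lra).
  assert (Hth' : 1 < th') by (unfold th'; lra).
  assert (Heta0 : 0 < eta).
  { unfold eta. apply Rmin_glb_lt. lra. apply Rdiv_lt_0_compat; lra. }
  assert (Heta1 : eta <= 1/3) by apply Rmin_l.
  assert (Heta2 : eta <= (be - 1) / (4 * be)) by apply Rmin_r.
  assert (Hkey : th' <= (1 - eta) ^ 3 * be).
  { assert (1 - 3 * eta <= (1 - eta) ^ 3) by (simpl; nra).
    assert (eta * (4 * be) <= be - 1).
    { apply (Rmult_le_compat_r (4 * be)) in Heta2; [|lra]. unfold Rdiv in Heta2.
      rewrite Rmult_assoc, Rinv_l, Rmult_1_r in Heta2; lra. }
    unfold th'. nra. }
  set (A := th * a).
  assert (HA : 0 < A < a) by (unfold A; split; nra). destruct HA as [HA0 HAa].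
  set (g1 := exp (- A) - exp (- a)).
  assert (Hg1 : 0 < g1) by (unfold g1; apply Rlt_0_minus, exp_increasing; lra).
  set (dl := (exp (- a) - exp (- (th' * a))) / 2).
  assert (Hdl : 0 < dl).
  { unfold dl. apply Rdiv_lt_0_compat; [|lra]. apply Rlt_0_minus, exp_increasing. nra. }
  set (rho := g1 / (18 * A)).
  assert (Hrho : 0 < rho) by (unfold rho; apply Rdiv_lt_0_compat; lra).
  assert (H6rho : 6 * rho * A = g1 / 3) by (unfold rho; field; lra).
  destruct (sv_lower phi Hsv 2 ltac:(lra) (1/3) ltac:(lra)) as [M2 HM2].
  set (X0 := Rmax M2 1).
  assert (HX0 : 0 < X0) by (unfold X0; eapply Rlt_le_trans; [|apply Rmax_r]; lra).
  assert (Hd2 : forall s, X0 <= s -> 2/3 * phi s <= phi (2 * s)).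
  { intros s Hs'. destruct (HM2 s) as [_ H]. eapply Rle_trans; [apply Rmax_l|eauto]. lra. }
  assert (Hd3 : forall s, X0 <= s -> phi s <= 3/2 * phi (2 * s)) by (intros s Hs'; specialize (Hd2 s Hs'); lra).
  intros M0.
  set (RR := Rmax M0 0 + 1).
  assert (HR : M0 < RR /\ 0 < RR) by (unfold RR; split; [assert (M0 <= Rmax M0 0) by apply Rmax_l| assert (0 <= Rmax M0 0) by apply Rmax_r]; lra).
  set (K := RR + 1).
  destruct (sv_lower phi Hsv 2 ltac:(lra) eta Heta0) as [Me HMe].
  destruct (sv_lower phi Hsv (K / rho) ltac:(apply Rdiv_lt_0_compat; unfold K; lra) eta Heta0) as [MK HMK].
  set (S0 := Rmax (Rmax (Rmax X0 Me) (Rmax MK T0)) (Rmax (rho * (- ln dl)) 1)).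
  assert (HS0 : X0 <= S0 /\ Me <= S0 /\ MK <= S0 /\ T0 <= S0 /\ rho * (- ln dl) <= S0 /\ 1 <= S0).
  { unfold S0. repeat split.
    apply mxl, mxl, mxl; lra. apply mxl, mxl, mxr; lra. apply mxl, mxr, mxl; lra.
    apply mxl, mxr, mxr; lra. apply mxr, mxl; lra. apply mxr, mxr; lra. }
  destruct HS0 as [HS0a [HS0b [HS0c [HS0d [HS0e HS0f]]]]].
  assert (HpS0 : 0 < phi S0) by (apply HT0; lra).
  set (W := 6 * X0 * rho * A / g1).
  assert (HW : 0 < W).
  { unfold W. apply Rdiv_lt_0_compat; [|lra]. apply Rmult_lt_0_compat; [|lra].
    apply Rmult_lt_0_compat; [|lra]. lra. }
  assert (HSp : 0 < S0 * phi S0) by (apply Rmult_lt_0_compat; lra).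
  destruct (nat_gt_real (3 * W / (S0 * phi S0))) as [n0 Hn0].
  set (X1 := S0 * 2 ^ n0).
  assert (HX1S : S0 <= X1) by (unfold X1; assert (1 <= 2 ^ n0) by (apply pow_ge1; lra); nra).
  assert (HX1W : W <= X1 * phi X1).
  { assert (H := grow_xphi phi X0 S0 HX0 Hd2 ltac:(lra) ltac:(lra) n0).
    assert (Hb := bernoulli (1/3) n0 ltac:(lra)). replace (1 + 1/3) with (4/3) in Hb by field.
    assert (3 * W < INR n0 * (S0 * phi S0)).
    { apply (Rmult_lt_compat_r (S0 * phi S0)) in Hn0; auto. unfold Rdiv in Hn0.
      rewrite Rmult_assoc, Rinv_l, Rmult_1_r in Hn0; lra. }
    unfold X1. nra. }
  assert (HpX1 : 0 < phi X1) by (apply HT0; lra).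
  assert (Hgrow : forall j, X1 * phi X1 <= (X1 * 2 ^ j) * phi (X1 * 2 ^ j)).
  { intros j. assert (H := grow_xphi phi X0 X1 HX0 Hd2 ltac:(lra) ltac:(lra) j).
    assert (1 <= (4/3) ^ j) by (apply pow_ge1; lra).
    assert (0 <= X1 * phi X1) by nra. nra. }
  set (t0 := Rmax T0 (Rmax 0 (1 - ln dl))).
  assert (Ht0 : T0 <= t0 /\ 0 <= t0 /\ 1 - ln dl <= t0).
  { unfold t0. repeat split. apply Rmax_l. apply mxr, Rmax_l. apply mxr, Rmax_r. }
  assert (Hpt0 : 0 < phi t0) by (apply HT0; tauto).
  set (Dr := Rmax (Rmax (A / phi X1) (3 * A ^ 2 / g1)) (Rmax (Rmax (1 / (eta * c)) 2) (th' * a / phi t0))).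
  destruct (nat_gt_real Dr) as [D HD].
  exists D. intros d Hd.
  assert (HdR : Dr < INR d) by (apply le_INR in Hd; lra).
  assert (HD1 : A / phi X1 < INR d) by (eapply Rle_lt_trans; [|apply HdR]; unfold Dr; apply mxl, Rmax_l).
  assert (HD2 : 3 * A ^ 2 / g1 < INR d) by (eapply Rle_lt_trans; [|apply HdR]; unfold Dr; apply mxl, Rmax_r).
  assert (HD3 : 1 / (eta * c) < INR d) by (eapply Rle_lt_trans; [|apply HdR]; unfold Dr; apply mxr, mxl, Rmax_l).
  assert (HD4 : 2 < INR d) by (eapply Rle_lt_trans; [|apply HdR]; unfold Dr; apply mxr, mxl, Rmax_r).
  assert (HD5 : th' * a / phi t0 < INR d) by (eapply Rle_lt_trans; [|apply HdR]; unfold Dr; apply mxr, Rmax_r).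
  assert (Hd1 : (1 <= d)%nat) by (apply INR_lt; simpl; lra).
  assert (HdR0 : 0 < INR d) by lra.
  assert (HDsel : A < INR d * phi X1).
  { apply (Rmult_lt_compat_r (phi X1)) in HD1; auto. unfold Rdiv in HD1.
    rewrite Rmult_assoc, Rinv_l, Rmult_1_r in HD1; lra. }
  assert (HX1pos : 0 < X1) by lra.
  destruct (select phi X1 (INR d) A HX1pos HA0 HdR0 Hmono Hto0 HDsel) as [j [Hj1 Hj2]].
  set (x := X1 * 2 ^ S j) in *.
  assert (Hx2 : x = 2 * (X1 * 2 ^ j)) by (unfold x; simpl; ring).
  assert (HXj : X1 <= X1 * 2 ^ j) by (assert (1 <= 2 ^ j) by (apply pow_ge1; lra); nra).
  assert (HxX1 : X1 <= x) by (rewrite Hx2; lra).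
  set (z := phi x) in *.
  assert (Hz : (1 - eta) * phi (X1 * 2 ^ j) < z).
  { destruct (HMe (X1 * 2 ^ j)) as [_ H]. lra. unfold z; rewrite Hx2; auto. }
  assert (Hz0 : 0 < z) by (apply HT0; lra).
  assert (Hz1 : z <= 1) by (apply Hle1; lra).
  set (y := INR d * z) in *.
  assert (Hy1 : y <= A) by auto.
  assert (Hy2 : (1 - eta) * A < y).
  { assert (0 < 1 - eta) by lra. unfold y.
    assert (INR d * ((1 - eta) * phi (X1 * 2 ^ j)) <= INR d * z) by (apply Rmult_le_compat_l; lra).
    nra. }
  assert (Hxz : W <= x * z).
  { assert (H := Hgrow (S j)). fold x in H. fold z in H. lra. }
  set (u := x / rho).
  assert (Hu : 0 < u) by (unfold u; apply Rdiv_lt_0_compat; lra).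
  assert (HUB : forall M, sumL (fev p u) (Box d M) <= eps ^ 2).
  { intros M. eapply Rle_trans. apply (upper_box p phi X0 x u d M); auto; lra.
    fold z.
    assert (E1 : INR d * (6 * x * z + 2 * X0) / u = 6 * rho * y + 2 * X0 * rho * INR d / x)
      by (unfold u, y; field; lra).
    rewrite E1.
    assert (E2 : 6 * rho * y <= g1 / 3) by (rewrite <- H6rho; apply Rmult_le_compat_l; lra).
    assert (E3 : 2 * X0 * rho * INR d / x <= g1 / 3).
    { assert (g1 / 3 * W = 2 * X0 * rho * A) by (unfold W; field; lra).
      assert (2 * X0 * rho * y <= g1 / 3 * (x * z)).
      { assert (2 * X0 * rho * y <= 2 * X0 * rho * A) by (apply Rmult_le_compat_l; [|lra]; nra).
        assert (g1 / 3 * W <= g1 / 3 * (x * z)) by (apply Rmult_le_compat_l; lra). lra. }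
      unfold y in H0.
      assert (2 * X0 * rho * INR d <= g1 / 3 * x).
      { apply (Rmult_le_reg_r z); auto. nra. }
      apply (Rmult_le_reg_r x); [lra|]. unfold Rdiv. rewrite Rmult_assoc, Rinv_l, Rmult_1_r; lra. }
    assert (E4 := pow_lower z d ltac:(lra)). fold y in E4.
    assert (E5 : y * z <= g1 / 3).
    { assert (INR d * z <= A) by auto.
      assert (y * z * INR d = y * y) by (unfold y; ring).
      assert (0 <= y) by (unfold y; nra).
      assert (y * z * INR d <= A * A) by nra.
      assert (A ^ 2 * 3 < g1 * INR d).
      { apply (Rmult_lt_compat_r g1) in HD2; auto. unfold Rdiv in HD2.
        rewrite Rmult_assoc, Rinv_l, Rmult_1_r in HD2; lra. }
      assert (y * z * INR d <= g1 / 3 * INR d) by (simpl in H2; nra).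
      apply (Rmult_le_reg_r (INR d)); auto. }
    assert (E6 : exp (- A) <= exp (- y)).
    { destruct Hy1 as [Hy1|Hy1]. left; apply exp_increasing; lra. rewrite Hy1; lra. }
    assert (E7 : exp (- y) <= 1).
    { rewrite <- exp_0. assert (0 < y) by (unfold y; nra). left; apply exp_increasing; lra. }
    assert (E8 : INR d * z ^ 2 = y * z) by (unfold y; simpl; ring).
    rewrite E8 in E4.
    assert (0 <= y * z) by nra.
    assert (Hee : 1 - exp (- A) + g1 = eps ^ 2) by (unfold g1; lra).
    assert (y * z * exp (- y) <= y * z) by nra.
    lra. }
  assert (HlnU : ln (INR (nX d)) <= u) by (apply (core_upper p d (mu d) eps (nX d) u); auto).
  assert (Hexpb : forall n (w : R), 0 <= w <= 1 -> th' * a <= INR n * w -> eps ^ 2 + 2 * dl <= 1 - (1 - w) ^ n).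
  { intros n w Hw Hnw. assert (H := pow_exp w n Hw).
    assert (exp (- (INR n * w)) <= exp (- (th' * a))).
    { destruct (Req_dec (INR n * w) (th' * a)) as [E|E]. rewrite E; lra. left; apply exp_increasing; lra. }
    unfold dl. lra. }
  assert (HlnP : t0 + ln dl <= ln (INR (nX d))).
  { apply (lower_final p phi d (mu d) eps (nX d) t0 dl); auto; try lra.
    apply Hexpb. split; [lra| apply Hle1; lra].
    apply (Rmult_lt_compat_r (phi t0)) in HD5; auto. unfold Rdiv in HD5.
    rewrite Rmult_assoc, Rinv_l, Rmult_1_r in HD5; lra. }
  assert (Hcd0 : 0 <= c * INR d) by nra.
  destruct (floorN_ge (c * INR d) Hcd0) as [Hm1 _].
  set (m := floorN (c * INR d)) in *.
  assert (Hm1' : (1 <= m)%nat) by (apply INR_lt; simpl; nra).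
  set (t := K * u).
  assert (Ht : t = (K / rho) * x) by (unfold t, u; field; lra).
  assert (Hphit : (1 - eta) * z < phi t).
  { destruct (HMK x) as [_ H]. lra. rewrite Ht. auto. }
  assert (Htt0 : 0 <= t) by (unfold t, K; nra).
  assert (Hmt : th' * a <= INR m * phi t).
  { assert (H1 : 1 <= eta * c * INR d).
    { apply (Rmult_lt_compat_r (eta * c)) in HD3; [|nra]. unfold Rdiv in HD3.
      rewrite Rmult_1_l, Rinv_l in HD3 by nra. lra. }
    assert (H2 : (1 - eta) * c * INR d <= c * INR d - 1) by nra.
    assert (H3 : (1 - eta) * c * INR d * ((1 - eta) * z) <= INR m * phi t).
    { apply Rmult_le_compat; try nra. }
    assert (H4 : (1 - eta) * c * INR d * ((1 - eta) * z) = (1 - eta) ^ 2 * c * y) by (unfold y; simpl; ring).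
    assert (H5 : (1 - eta) ^ 3 * be * a <= (1 - eta) ^ 2 * c * y).
    { assert (0 < (1 - eta) ^ 2) by (apply pow_lt; lra).
      assert (Hq1 : (1 - eta) * (c * A) < c * y) by nra.
      assert (Hq2 : c * A = be * a) by (unfold A; rewrite <- Hcth; ring).
      assert (Hq3 : (1 - eta) ^ 3 * be * a = (1 - eta) ^ 2 * ((1 - eta) * (c * A))) by (rewrite Hq2; simpl; ring).
      rewrite Hq3. assert (Hq4 : (1 - eta) ^ 2 * c * y = (1 - eta) ^ 2 * (c * y)) by ring. rewrite Hq4.
      apply Rmult_le_compat_l; lra. }
    assert (th' * a <= (1 - eta) ^ 3 * be * a) by (apply Rmult_le_compat_r; lra).
    lra. }
  assert (HlnL : t + ln dl <= ln (INR (nX m))).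
  { apply (lower_final p phi m (mu m) eps (nX m) t dl); auto.
    apply Hexpb; auto. split; [left; apply (Rlt_trans _ ((1 - eta) * z)); nra| apply Hle1; lra]. }
  assert (HuL : - ln dl <= u).
  { unfold u. apply (Rmult_le_reg_r rho); auto. unfold Rdiv. rewrite Rmult_assoc, Rinv_l, Rmult_1_r; nra. }
  set (Ld := ln (INR (nX d))) in *. set (Lm := ln (INR (nX m))) in *.
  assert (HLd : 0 < Ld) by lra.
  assert (RR * Ld <= Lm).
  { assert (RR * Ld <= RR * u) by (apply Rmult_le_compat_l; lra). unfold t, K in HlnL. nra. }
  assert (RR <= Lm / Ld).
  { apply (Rmult_le_reg_r Ld); auto. unfold Rdiv. rewrite Rmult_assoc, Rinv_l, Rmult_1_r; lra. }
  lra.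
Qed.
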